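(* Let $n$ be a positive integer and let $\alpha,\beta,\gamma,\delta: \mathcal{P}(n) \to [0,\infty)$ satisfy \[ \alpha(A)\beta(B) \leq \gamma(A \cup B)\,\delta(A \cap B) \quad \text{for all } A,B \in \mathcal{P}(n). \] Then \[ \sum_{A \in \mathcal{P}(n)}\alpha(A)\beta(A^c) \leq \sum_{C \in \mathcal{P}(n)}\gamma(C)\delta(C^c). \]
   Context: $[n]=\{1,\dots,n\}$, $\mathcal{P}(n)$ denotes the power set of $[n]$, and $A^c = [n]\setminus A$ denotes the complement of $A$ in $[n]$. *)

(* Defs.v *)
(* [n] is modelled by 'I_n (finite type of n elements),
   P(n) by {set 'I_n}, complement A^c by ~: A. Real values: any realFieldType. *)
From HB Require Import structures.
From mathcomp Require Import all_boot all_order all_algebra.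

(* Main.v *)
Require Import Defs.
From mathcomp Require Import all_boot all_order all_algebra.
Import Order.TTheory GRing.Theory Num.Theory.
Local Open Scope ring_scope.

Lemma sum2_le (R : realFieldType) (p q r s : R) :
  0 <= p -> 0 <= q -> 0 <= s -> p <= r -> q <= r -> p * q <= r * s -> p + q <= r + s.
Proof.
move=> p0 q0 s0 pr qr pqrs.
have r0 : 0 <= r by apply: le_trans pr.
have [req|rne] := eqVneq r 0.
  subst r.
  have -> : p = 0 by apply/eqP; rewrite eq_le p0 pr.
  have -> : q = 0 by apply/eqP; rewrite eq_le q0 qr.
  by rewrite addr0 add0r.
have rp : 0 < r by rewrite lt_def rne r0.
rewrite -(ler_pM2l rp).
have h1 : 0 <= (r - p) * (r - q) by apply: mulr_ge0; rewrite subr_ge0.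
have e : (r - p) * (r - q) = r * r + p * q - r * (p + q).
  rewrite mulrBl !mulrBr mulrDr opprB (mulrC p r) opprD.
  by rewrite addrACA (addrC (- (r * q))).
rewrite e subr_ge0 in h1.
apply: le_trans h1 _.
by rewrite mulrDr lerD2l.
Qed.

Lemma one_dim (R : realFieldType) (a0 a1 b0 b1 c0 c1 d0 d1 : R) :
  0 <= a0 -> 0 <= a1 -> 0 <= b0 -> 0 <= b1 -> 0 <= c0 -> 0 <= c1 -> 0 <= d0 -> 0 <= d1 ->
  a0 * b0 <= c0 * d0 -> a1 * b1 <= c1 * d1 -> a0 * b1 <= c1 * d0 -> a1 * b0 <= c1 * d0 ->
  (a0 + a1) * (b0 + b1) <= (c0 + c1) * (d0 + d1).
Proof.
move=> a00 a10 b00 b10 c00 c10 d00 d10 h00 h11 h01 h10.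
have key : (a0 * b1) * (a1 * b0) <= (c1 * d0) * (c0 * d1).
  have -> : (a0 * b1) * (a1 * b0) = (a0 * b0) * (a1 * b1).
    by rewrite [LHS]mulrACA [RHS]mulrACA [b1 * b0]mulrC.
  have -> : (c1 * d0) * (c0 * d1) = (c0 * d0) * (c1 * d1).
    by rewrite [LHS]mulrACA [RHS]mulrACA [c1 * c0]mulrC.
  by apply: ler_pM => //; apply: mulr_ge0.
have hs := @sum2_le R _ _ _ _ (mulr_ge0 a00 b10) (mulr_ge0 a10 b00) (mulr_ge0 c00 d10) h01 h10 key.
rewrite !mulrDl !mulrDr [a1 * b0 + _]addrC [c1 * d0 + _]addrC [leLHS]addrACA [leRHS]addrACA.
rewrite [c0 * d1 + _]addrC.
exact: lerD (lerD h00 h11) hs.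
Qed.
Lemma split_sum (R : realFieldType) (T : finType) (U : {set T}) (x : T) (F : {set T} -> R) :
  x \notin U ->
  \sum_(A : {set T} | A \subset x |: U) F A = \sum_(A : {set T} | A \subset U) (F A + F (x |: A)).
Proof.
move=> xU.
rewrite big_split /= (bigID (fun A : {set T} => x \in A)) /= addrC; congr (_ + _).
  apply: eq_bigl => A; apply/idP/idP.
    case/andP=> sA xA; apply/subsetP=> y yA.
    have := subsetP sA y yA; rewrite in_setU1; case/orP=> // /eqP eyx.
    by move: xA; rewrite -eyx yA.
  move=> sA; have xA : x \notin A by apply/negP=> xA; move: xU; rewrite (subsetP sA x xA).
  by rewrite xA andbT; apply: subset_trans sA (subsetUr _ _).
rewrite (reindex_onto (fun B => x |: B) (fun A => A :\ x)) /=; last first.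
  by move=> A /andP[_ xA]; rewrite setD1K.
apply: eq_bigl => B; apply/idP/idP.
  case/andP=> /andP[sB _] /eqP eB.
  have xB : x \notin B by rewrite -eB setD11.
  apply/subsetP=> y yB; have := subsetP sB y; rewrite !in_setU1 yB orbT.
  case/(_ isT)/orP=> // /eqP eyx; by move: xB; rewrite -eyx yB.
move=> sB; have xB : x \notin B by apply/negP=> xB; move: xU; rewrite (subsetP sB x xB).
rewrite setU11 andbT setU1K // eqxx andbT.
by apply: setUS.
Qed.

Lemma fft (R : realFieldType) (T : finType) (k : nat) : forall (U : {set T}), #|U| = k ->
  forall a b c d : {set T} -> R,
  (forall A, 0 <= a A) -> (forall A, 0 <= b A) -> (forall A, 0 <= c A) -> (forall A, 0 <= d A) ->
  (forall A B : {set T}, A \subset U -> B \subset U -> a A * b B <= c (A :|: B) * d (A :&: B)) ->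
  (\sum_(A : {set T} | A \subset U) a A) * (\sum_(B : {set T} | B \subset U) b B)
    <= (\sum_(C : {set T} | C \subset U) c C) * (\sum_(D : {set T} | D \subset U) d D).
Proof.
elim: k => [|k IH] U cU a b c d ha hb hc hd h.
  have U0 : U = set0 by apply/eqP; rewrite -cards_eq0 cU.
  subst U.
  have E : forall F : {set T} -> R, \sum_(A : {set T} | A \subset set0) F A = F set0.
    move=> F; rewrite (big_pred1 set0) // => A; by rewrite subset0.
  rewrite !E; have := h set0 set0 (sub0set _) (sub0set _).
  by rewrite setU0 setI0.
have : (0 < #|U|)%N by rewrite cU.
case/card_gt0P => x xU.
set U' := U :\ x.
have xU' : x \notin U' by rewrite setD11.
have eU : U = x |: U' by rewrite setD1K.
have cU' : #|U'| = k by move: cU; rewrite eU cardsU1 xU' add1n => -[].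
rewrite eU !split_sum //.
apply: (IH U' cU') => //.
- by move=> A; apply: addr_ge0.
- by move=> A; apply: addr_ge0.
- by move=> A; apply: addr_ge0.
- by move=> A; apply: addr_ge0.
move=> A B sA sB.
have xA : x \notin A by apply/negP=> xA; move: xU'; rewrite (subsetP sA x xA).
have xB : x \notin B by apply/negP=> xB; move: xU'; rewrite (subsetP sB x xB).
have sU : forall C : {set T}, C \subset U' -> C \subset U by move=> C sC; apply: subset_trans sC (subsetDl U [set x]).
have sxU : forall C : {set T}, C \subset U' -> x |: C \subset U by move=> C sC; rewrite subUset sub1set xU (sU _ sC).
have E1 : (x |: A) :|: (x |: B) = x |: (A :|: B).
  by apply/setP=> y; rewrite !inE; case: (y == x); case: (y \in A); case: (y \in B).
have E2 : (x |: A) :&: (x |: B) = x |: (A :&: B).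
  by apply/setP=> y; rewrite !inE; case: (y == x); case: (y \in A); case: (y \in B).
have E3 : A :|: (x |: B) = x |: (A :|: B).
  by apply/setP=> y; rewrite !inE; case: (y == x); case: (y \in A); case: (y \in B).
have E4 : (x |: A) :|: B = x |: (A :|: B).
  by apply/setP=> y; rewrite !inE; case: (y == x); case: (y \in A); case: (y \in B).
have E5 : A :&: (x |: B) = A :&: B.
  apply/setP=> y; rewrite !inE; case: eqP => [->|_]; last by [].
  by rewrite (negbTE xA).
have E6 : (x |: A) :&: B = A :&: B.
  apply/setP=> y; rewrite !inE; case: eqP => [->|_]; last by [].
  by rewrite (negbTE xB) !andbF.
apply: one_dim => //.
- exact: h (sU _ sA) (sU _ sB).
- by have := h _ _ (sxU _ sA) (sxU _ sB); rewrite E1 E2.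
- by have := h _ _ (sU _ sA) (sxU _ sB); rewrite E3 E5.
- by have := h _ _ (sxU _ sA) (sU _ sB); rewrite E4 E6.
Qed.

Theorem theorem2p2 (R : realFieldType) (n : nat) (hn : (0 < n)%N)
  (alpha beta gamma delta : {set 'I_n} -> R)
  (ha : forall A, 0 <= alpha A) (hb : forall A, 0 <= beta A)
  (hc : forall A, 0 <= gamma A) (hd : forall A, 0 <= delta A)
  (hineq : forall A B : {set 'I_n},
     alpha A * beta B <= gamma (A :|: B) * delta (A :&: B)) :
  \sum_(A : {set 'I_n}) alpha A * beta (~: A)
    <= \sum_(C : {set 'I_n}) gamma C * delta (~: C).
Proof.
pose f := fun A : {set 'I_n} => alpha A * beta (~: A).
pose g := fun C : {set 'I_n} => gamma C * delta (~: C).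
have f0 : forall A, 0 <= f A by move=> A; apply: mulr_ge0.
have g0 : forall A, 0 <= g A by move=> A; apply: mulr_ge0.
have H := @fft R _ _ [set: 'I_n] erefl f (fun B => f (~: B)) g (fun D => g (~: D))
  f0 (fun B => f0 _) g0 (fun D => g0 _).
have E : forall F : {set 'I_n} -> R, \sum_(A : {set 'I_n} | A \subset setT) F A = \sum_A F A.
  by move=> F; apply: eq_bigl => A; rewrite subsetT.
have EC : forall F : {set 'I_n} -> R, \sum_A F (~: A) = \sum_A F A.
  by move=> F; rewrite (reindex_inj (@setC_inj _)) /=; apply: eq_bigr => A _; rewrite setCK.
rewrite !E !EC in H.
have H' : (\sum_A f A) * (\sum_A f A) <= (\sum_A g A) * (\sum_A g A).
  apply: H => A B _ _.
  rewrite /f /g !setCK.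
  have -> : alpha A * beta (~: A) * (alpha (~: B) * beta B)
          = (alpha A * beta B) * (alpha (~: B) * beta (~: A)).
    by rewrite [LHS]mulrACA [RHS]mulrACA [beta B * _]mulrC.
  have -> : gamma (A :|: B) * delta (~: (A :|: B)) * (gamma (~: (A :&: B)) * delta (A :&: B))
          = (gamma (A :|: B) * delta (A :&: B)) * (gamma (~: (A :&: B)) * delta (~: (A :|: B))).
    by rewrite [LHS]mulrACA [RHS]mulrACA [delta (A :&: B) * _]mulrC.
  apply: ler_pM; try apply: mulr_ge0 => //.
    exact: hineq.
  by have := hineq (~: B) (~: A); rewrite setCU setCI [~: B :|: _]setUC [~: B :&: _]setIC.
rewrite -ler_sqr ?nnegrE; first by rewrite !expr2.
- by apply: sumr_ge0 => A _; apply: mulr_ge0.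
- by apply: sumr_ge0 => A _; apply: mulr_ge0.
Qed.
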